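(* Let $C>0$, $c_{1,i}=\frac{\beta_i}{2C}$, $r=\sqrt{u^2+v^2}$ and for $i=1,2$ $\varphi_{1,i}(u,v,z)=\frac{r^{p_i}z^{q_i}}{(C^{-2}+1)^{\beta_i/2}}\left|\frac{r}{v}\right|^{\beta_i}+c_{1,i}r^{p_i}z^{q_i}\left|\frac{r}{v}\right|^{\beta_i}\int_{u/|v|}^{1/C}(t^2+1)^{\frac{\alpha_i-\beta_i-1}{2}}\,dt.$ Then for all $r_*>0$ sufficiently large, on $\mathcal{R}_1=\{(u,v,z): r\ge r_*,\ C^{-1}|v|\ge u\ge-C|v|,\ 0<z\le1\}$, $\mathcal{L}\varphi_{1,i}(u,v,z)\le-\frac{c_{1,i}}{2}r^{p_i+1}z^{q_i}\left|\frac{r}{v}\right|^{\alpha_i}$, $i=1,2$, and for all $(u,v,1)\in\mathcal{R}_1$, $\mathcal{Q}(\varphi_{1,1}+\varphi_{1,2})(u,v,1)\le-\left(\tfrac{q_2}{2}-\tfrac{p_2}{6}\right)r^{p_2}.$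
   Context: Fix $\gamma>0$, $h\in(0,1)$, $\kappa_1,\kappa_2>0$ and $\alpha_h=\frac13+\frac23h$. Constants $p_i,q_i,\alpha_i,\beta_i$ ($i=1,2$) satisfy $p_1>0$, $p_2>0$, $q_1=0$, $q_2>0$, $0<\alpha_hp_i-(1-h)q_i=\beta_i<\alpha_i<1$, $q_2>\frac13p_2+\frac12\alpha_2$, $p_2>p_1$, $p_2+\frac32\alpha_2>p_1+\frac32\alpha_1$. The operators are $\mathcal{L}=-\gamma u\partial_u-\gamma v\partial_v-\frac{\alpha_hu^2-v^2}{z^{2/3}}\partial_u-(\alpha_h+1)\frac{uv}{z^{2/3}}\partial_v+(1-h)uz^{1/3}\partial_z+\frac{\kappa_1}{z^{2/3}}\partial_u^2+\frac{\kappa_2}{z^{2/3}}\partial_v^2$, $\mathcal{Q}=\frac{u}{3z}\partial_u+\frac{v}{3z}\partial_v-\partial_z$. *)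

(* Defs.v *)
From Stdlib Require Import Reals Lra.
From Coquelicot Require Import Coquelicot.
Open Scope R_scope.

Definition rad (u v : R) : R := sqrt (u ^ 2 + v ^ 2).

(* phi_{1,i}(u,v,z) with parameters C, p = p_i, q = q_i, al = alpha_i, be = beta_i;
   c_{1,i} = be / (2 C). *)
Definition phi1 (C p q al be : R) (u v z : R) : R :=
  let r := rad u v in
  Rpower r p * Rpower z q / Rpower (/ (C ^ 2) + 1) (be / 2) * Rpower (Rabs (r / v)) be
  + (be / (2 * C)) * Rpower r p * Rpower z q * Rpower (Rabs (r / v)) be
    * RInt (fun t => Rpower (t ^ 2 + 1) ((al - be - 1) / 2)) (u / Rabs v) (1 / C).

Definition d_u (f : R -> R -> R -> R) (u v z : R) : R := Derive (fun x => f x v z) u.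
Definition d_v (f : R -> R -> R -> R) (u v z : R) : R := Derive (fun x => f u x z) v.
Definition d_z (f : R -> R -> R -> R) (u v z : R) : R := Derive (fun x => f u v x) z.
Definition d_uu (f : R -> R -> R -> R) (u v z : R) : R :=
  Derive (fun x => Derive (fun y => f y v z) x) u.
Definition d_vv (f : R -> R -> R -> R) (u v z : R) : R :=
  Derive (fun x => Derive (fun y => f u y z) x) v.

Definition alpha_h (h : R) : R := 1 / 3 + 2 / 3 * h.

Definition Lop (gamma h k1 k2 : R) (f : R -> R -> R -> R) (u v z : R) : R :=
  - gamma * u * d_u f u v z - gamma * v * d_v f u v z
  - (alpha_h h * u ^ 2 - v ^ 2) / Rpower z (2 / 3) * d_u f u v z
  - (alpha_h h + 1) * (u * v) / Rpower z (2 / 3) * d_v f u v z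
  + (1 - h) * u * Rpower z (1 / 3) * d_z f u v z
  + k1 / Rpower z (2 / 3) * d_uu f u v z
  + k2 / Rpower z (2 / 3) * d_vv f u v z.

Definition Qop (f : R -> R -> R -> R) (u v z : R) : R :=
  u / (3 * z) * d_u f u v z + v / (3 * z) * d_v f u v z - d_z f u v z.

Definition region1 (C rstar u v z : R) : Prop :=
  rad u v >= rstar /\ / C * Rabs v >= u /\ u >= - C * Rabs v /\ 0 < z <= 1.

(* Main.v *)
Require Import Defs.
From Stdlib Require Import Reals Lra.
From Coquelicot Require Import Coquelicot.
Open Scope R_scope.

Lemma isd_mult (f g : R -> R) (x df dg : R) : is_derive f x df -> is_derive g x dg ->
  is_derive (fun y => f y * g y) x (df * g x + f x * dg).
Proof. intros. apply (is_derive_mult f g); auto. intros; apply Rmult_comm. Qed.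
Lemma isd_plus (f g : R -> R) (x df dg : R) : is_derive f x df -> is_derive g x dg ->
  is_derive (fun y => f y + g y) x (df + dg).
Proof. intros. apply (is_derive_plus f g); auto. Qed.
Lemma isd_comp (f g : R -> R) (x df dg : R) : is_derive f (g x) df -> is_derive g x dg ->
  is_derive (fun y => f (g y)) x (dg * df).
Proof. intros. apply (is_derive_comp f g); auto. Qed.
Lemma isd_const (c x : R) : is_derive (fun _ : R => c) x 0.
Proof. apply (is_derive_const c). Qed.
Lemma isd_id (x : R) : is_derive (fun y : R => y) x 1.
Proof. apply (is_derive_id x). Qed.
Lemma isd_eq (f : R -> R) (x l l' : R) : is_derive f x l -> l = l' -> is_derive f x l'.
Proof. intros H ->; exact H. Qed.
Lemma isd_Rpower (a x : R) : 0 < x -> is_derive (fun y => Rpower y a) x (a * Rpower x (a - 1)).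
Proof. intros. apply is_derive_Reals. apply derivable_pt_lim_power; auto. Qed.

Definition Pw (a s : R) : R := Rpower (1 + s ^ 2) a.

Lemma Pw_pos a s : 0 < Pw a s.
Proof. unfold Pw, Rpower. apply exp_pos. Qed.
Lemma Pw_plus a b s : Pw (a + b) s = Pw a s * Pw b s.
Proof. unfold Pw. apply Rpower_plus. Qed.
Lemma Pw_1 s : Pw 1 s = 1 + s ^ 2.
Proof. unfold Pw. apply Rpower_1. nra. Qed.
Lemma Pw_0 s : Pw 0 s = 1.
Proof. unfold Pw. apply Rpower_O. nra. Qed.
Lemma Pw_deriv a s : is_derive (Pw a) s (2 * a * s * Pw (a - 1) s).
Proof.
  unfold Pw.
  apply (isd_eq _ _ ((0 + (1 * s + s * 1)) * (a * Rpower (1 + s ^ 2) (a - 1)))).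
  - apply (isd_comp (fun y => Rpower y a) (fun y => 1 + y ^ 2)).
    + apply isd_Rpower. nra.
    + apply isd_plus. apply isd_const.
      apply (is_derive_ext (fun y => y * y)). intros; simpl; ring.
      apply isd_mult; apply isd_id.
  - ring.
Qed.
Lemma Pw_cont (a s : R) : continuous (Pw a) s.
Proof. apply (ex_derive_continuous (K:=R_AbsRing) (V:=R_NormedModule)). eexists. apply Pw_deriv. Qed.
Lemma Pw_ge1 a s : 0 <= a -> 1 <= Pw a s.
Proof.
  intros. unfold Pw. apply Rle_trans with (Rpower (1+s^2) 0).
  rewrite Rpower_O; nra. apply Rle_Rpower; nra.
Qed.
Lemma Pw_le1 a s : a <= 0 -> Pw a s <= 1.
Proof.
  intros. unfold Pw. apply Rle_trans with (Rpower (1+s^2) 0).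
  apply Rle_Rpower; nra. rewrite Rpower_O; nra.
Qed.
Lemma Pw_mono_exp a b s : a <= b -> Pw a s <= Pw b s.
Proof. intros. unfold Pw. apply Rle_Rpower; nra. Qed.
Lemma Pw_mono_s a s s' : 0 <= a -> s ^ 2 <= s' ^ 2 -> Pw a s <= Pw a s'.
Proof. intros. unfold Pw. apply Rle_Rpower_l; nra. Qed.
Lemma Pw_m1 s : Pw (-1) s = / (1 + s ^ 2).
Proof. unfold Pw. replace (-1) with (- (1)) by ring. rewrite Rpower_Ropp, Rpower_1; nra. Qed.
Lemma Pw_bound a s N : s ^ 2 <= N -> Pw a s <= Pw (Rabs a) (sqrt N).
Proof.
  intros. apply Rle_trans with (Pw (Rabs a) s).
  apply Pw_mono_exp. apply Rle_abs.
  apply Pw_mono_s. apply Rabs_pos.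
  rewrite pow2_sqrt; nra.
Qed.

Definition fI (e t s : R) : R := RInt (Pw e) s t.

Lemma Pw_exRInt e a b : ex_RInt (Pw e) a b.
Proof. apply (ex_RInt_continuous (V:=R_CompleteNormedModule)). intros; apply Pw_cont. Qed.

Lemma fI_deriv (e t s : R) : is_derive (fI e t) s (- Pw e s).
Proof.
  apply (is_derive_RInt' (Pw e) (fI e t) s t).
  - apply filter_forall. intros; apply (RInt_correct (V:=R_CompleteNormedModule)), Pw_exRInt.
  - apply Pw_cont.
Qed.

Definition Kf (A c e t s : R) : R := A + c * fI e t s.
Definition Hf (m A c e t s : R) : R := Pw m s * Kf A c e t s.
Definition H1f (m A c e t s : R) : R :=
  2 * m * s * Pw (m - 1) s * Kf A c e t s - c * Pw m s * Pw e s.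
Definition H2f (m A c e t s : R) : R :=
  (2 * m * Pw (m - 1) s + 4 * m * (m - 1) * s ^ 2 * Pw (m - 2) s) * Kf A c e t s
  - 2 * m * s * Pw (m - 1) s * c * Pw e s
  - c * (2 * m * s * Pw (m - 1) s * Pw e s + Pw m s * (2 * e * s * Pw (e - 1) s)).

Lemma Kf_deriv A c e t s : is_derive (Kf A c e t) s (- c * Pw e s).
Proof.
  unfold Kf. eapply isd_eq.
  apply isd_plus. apply isd_const. apply isd_mult. apply isd_const. apply fI_deriv.
  cbv beta; ring.
Qed.

Lemma Hf_deriv m A c e t s : is_derive (Hf m A c e t) s (H1f m A c e t s).
Proof.
  unfold Hf, H1f. eapply isd_eq.
  apply isd_mult. apply Pw_deriv. apply Kf_deriv.
  cbv beta; ring.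
Qed.

Lemma H1f_deriv m A c e t s : is_derive (H1f m A c e t) s (H2f m A c e t s).
Proof.
  unfold H1f, H2f. eapply isd_eq.
  apply (isd_plus (fun s => 2 * m * s * Pw (m - 1) s * Kf A c e t s)
                  (fun s => - (c * Pw m s * Pw e s))).
  apply isd_mult. apply isd_mult. apply isd_mult. apply isd_const. apply isd_id.
  apply Pw_deriv. apply Kf_deriv.
  apply (is_derive_opp (fun s => c * Pw m s * Pw e s)).
  apply isd_mult. apply isd_mult. apply isd_const. apply Pw_deriv. apply Pw_deriv.
  replace (m - 1 - 1) with (m - 2) by ring. unfold opp; simpl. ring.
Qed.

Lemma Rpower_pm1 (w p : R) : 0 < w -> Rpower w (p - 1) = Rpower w p / w.
Proof.
  intros. unfold Rminus. rewrite Rpower_plus. replace (-(1)) with (- (1)) by ring.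
  rewrite Rpower_Ropp, Rpower_1 by auto. field. lra.
Qed.

Lemma Rpow_deriv (p w : R) : 0 < w -> is_derive (fun y => Rpower y p) w (p * Rpower w p / w).
Proof.
  intros. eapply isd_eq. apply isd_Rpower; auto. rewrite Rpower_pm1 by auto. field. lra.
Qed.

Lemma div_deriv (x w : R) : w <> 0 -> is_derive (fun y => x / y) w (- x / w ^ 2).
Proof.
  intros. eapply isd_eq. apply (is_derive_scal (fun y => / y)).
  apply (is_derive_inv (fun y => y)). apply isd_id. auto. field. auto.
Qed.

Lemma divr_deriv (w x : R) : w <> 0 -> is_derive (fun y => y / w) x (/ w).
Proof.
  intros. eapply isd_eq. apply (isd_mult (fun y => y) (fun _ => / w)).
  apply isd_id. apply isd_const. cbv beta; ring.
Qed.

Lemma Gu_deriv (H H1 : R -> R) (K0 w x : R) : (forall s, is_derive H s (H1 s)) -> w <> 0 ->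
  is_derive (fun y => K0 * H (y / w)) x (K0 / w * H1 (x / w)).
Proof.
  intros dH Hw. eapply isd_eq. apply (is_derive_scal (fun y => H (y / w))).
  apply (isd_comp H (fun y => y / w)). apply dH. apply divr_deriv; auto.
  field. auto.
Qed.

Lemma Gv_deriv (H H1 : R -> R) (p x w : R) : (forall s, is_derive H s (H1 s)) -> 0 < w ->
  is_derive (fun y => Rpower y p * H (x / y)) w
    (Rpower w p / w * (p * H (x / w) - (x / w) * H1 (x / w))).
Proof.
  intros dH Hw. eapply isd_eq. apply (isd_mult (fun y => Rpower y p) (fun y => H (x / y))).
  apply Rpow_deriv; auto. apply (isd_comp H (fun y => x / y)). apply dH. apply div_deriv; lra.
  field. lra.
Qed.

Lemma Gv1_deriv (H H1 H2 : R -> R) (p x w : R) : (forall s, is_derive H s (H1 s)) ->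
  (forall s, is_derive H1 s (H2 s)) -> 0 < w ->
  is_derive (fun y => Rpower y p / y * (p * H (x / y) - (x / y) * H1 (x / y))) w
    (Rpower w p / w ^ 2 * (p * (p - 1) * H (x / w) - 2 * (p - 1) * (x / w) * H1 (x / w)
        + (x / w) ^ 2 * H2 (x / w))).
Proof.
  intros dH dH1 Hw. eapply isd_eq.
  apply (isd_mult (fun y => Rpower y p / y) (fun y => p * H (x / y) - (x / y) * H1 (x / y))).
  apply (isd_mult (fun y => Rpower y p) (fun y => / y)). apply Rpow_deriv; auto.
  apply (is_derive_inv (fun y => y)). apply isd_id. lra.
  apply (isd_plus (fun y => p * H (x / y)) (fun y => - ((x / y) * H1 (x / y)))).
  apply (is_derive_scal (fun y => H (x / y))).
  apply (isd_comp H (fun y => x / y)). apply dH. apply div_deriv; lra.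
  apply (is_derive_opp (fun y => (x / y) * H1 (x / y))).
  apply (isd_mult (fun y => x / y) (fun y => H1 (x / y))). apply div_deriv; lra.
  apply (isd_comp H1 (fun y => x / y)). apply dH1. apply div_deriv; lra.
  unfold opp; simpl. field. lra.
Qed.

Lemma isd_ext (f g : R -> R) (x l : R) : (forall t, f t = g t) -> is_derive f x l -> is_derive g x l.
Proof. apply is_derive_ext. Qed.
Lemma isd_ext_loc (f g : R -> R) (x l : R) : locally x (fun t => f t = g t) -> is_derive f x l -> is_derive g x l.
Proof. apply is_derive_ext_loc. Qed.
Lemma isd_scal (f : R -> R) (x k df : R) : is_derive f x df -> is_derive (fun y => k * f y) x (k * df).
Proof. apply is_derive_scal. Qed.
Lemma isd_unique (f : R -> R) (x l : R) : is_derive f x l -> Derive f x = l.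
Proof. apply is_derive_unique. Qed.

Lemma rad_eq (u v : R) : v <> 0 -> rad u v = Rabs v * sqrt (1 + (u / Rabs v) ^ 2).
Proof.
  intros Hv. assert (Hw : 0 < Rabs v) by (apply Rabs_pos_lt; auto).
  unfold rad. replace (u ^ 2 + v ^ 2) with ((Rabs v) ^ 2 * (1 + (u / Rabs v) ^ 2)).
  rewrite sqrt_mult. rewrite sqrt_pow2 by lra. auto. nra.
  assert (0 <= (u / Rabs v) ^ 2) by nra. lra.
  rewrite <- (pow2_abs v). field. lra.
Qed.

Lemma sqrt_Pw (s a : R) : Rpower (sqrt (1 + s ^ 2)) a = Pw (a / 2) s.
Proof.
  rewrite <- Rpower_sqrt by nra. rewrite Rpower_mult. unfold Pw. f_equal. field.
Qed.

Lemma Rpower_rad (u v a : R) : v <> 0 ->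
  Rpower (rad u v) a = Rpower (Rabs v) a * Pw (a / 2) (u / Rabs v).
Proof.
  intros Hv. assert (Hw : 0 < Rabs v) by (apply Rabs_pos_lt; auto).
  rewrite rad_eq by auto. rewrite <- Rpower_mult_distr; auto.
  rewrite sqrt_Pw; auto. apply sqrt_lt_R0. nra.
Qed.

Lemma Rpower_radv (u v a : R) : v <> 0 ->
  Rpower (Rabs (rad u v / v)) a = Pw (a / 2) (u / Rabs v).
Proof.
  intros Hv. assert (Hw : 0 < Rabs v) by (apply Rabs_pos_lt; auto).
  rewrite rad_eq by auto. rewrite <- sqrt_Pw. f_equal.
  assert (0 < sqrt (1 + (u / Rabs v) ^ 2)) by (apply sqrt_lt_R0; nra).
  unfold Rdiv at 1. rewrite Rabs_mult, Rabs_mult, Rabs_Rinv by auto.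
  rewrite Rabs_Rabsolu, (Rabs_right (sqrt _)) by lra. field. lra.
Qed.

Definition Hc (C p al be s : R) : R :=
  Hf ((p + be) / 2) (/ Rpower (/ C ^ 2 + 1) (be / 2)) (be / (2 * C)) ((al - be - 1) / 2) (1 / C) s.

Lemma phi1_eq (C p q al be u v z : R) : 0 < C -> v <> 0 ->
  phi1 C p q al be u v z = Rpower z q * (Rpower (Rabs v) p * Hc C p al be (u / Rabs v)).
Proof.
  intros HC Hv. unfold phi1, Hc, Hf, Kf, fI. cbv zeta.
  rewrite Rpower_rad, Rpower_radv by auto.
  replace (RInt (fun t : R => Rpower (t ^ 2 + 1) ((al - be - 1) / 2)) (u / Rabs v) (1 / C))
    with (RInt (Pw ((al - be - 1) / 2)) (u / Rabs v) (1 / C)).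
  2:{ apply RInt_ext. intros. unfold Pw. f_equal. ring. }
  replace ((p + be) / 2) with (p / 2 + be / 2) by field. rewrite Pw_plus.
  field. split. lra. apply Rgt_not_eq. unfold Rpower. apply exp_pos.
Qed.

Definition H1c (C p al be s : R) : R :=
  H1f ((p + be) / 2) (/ Rpower (/ C ^ 2 + 1) (be / 2)) (be / (2 * C)) ((al - be - 1) / 2) (1 / C) s.
Definition H2c (C p al be s : R) : R :=
  H2f ((p + be) / 2) (/ Rpower (/ C ^ 2 + 1) (be / 2)) (be / (2 * C)) ((al - be - 1) / 2) (1 / C) s.
Lemma Hc_deriv C p al be s : is_derive (Hc C p al be) s (H1c C p al be s).
Proof. apply Hf_deriv. Qed.
Lemma H1c_deriv C p al be s : is_derive (H1c C p al be) s (H2c C p al be s).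
Proof. apply H1f_deriv. Qed.

Definition G1f (C p al be u w : R) : R :=
  Rpower w p / w * (p * Hc C p al be (u / w) - (u / w) * H1c C p al be (u / w)).
Definition G2f (C p al be u w : R) : R :=
  Rpower w p / w ^ 2 * (p * (p - 1) * Hc C p al be (u / w)
     - 2 * (p - 1) * (u / w) * H1c C p al be (u / w) + (u / w) ^ 2 * H2c C p al be (u / w)).

Lemma Rabs_pos' (v : R) : v <> 0 -> 0 < Rabs v.
Proof. intros; apply Rabs_pos_lt; auto. Qed.

Global Opaque Hc H1c H2c phi1.

Lemma du_is C p q al be u v z : 0 < C -> v <> 0 ->
  is_derive (fun x => phi1 C p q al be x v z) u
    (Rpower z q * Rpower (Rabs v) p / Rabs v * H1c C p al be (u / Rabs v)).
Proof.
  intros HC Hv. pose proof (Rabs_pos' v Hv).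
  apply (isd_ext (fun x => (Rpower z q * Rpower (Rabs v) p) * Hc C p al be (x / Rabs v))).
  intros t. rewrite phi1_eq; auto. ring.
  eapply isd_eq. apply (Gu_deriv (Hc C p al be) (H1c C p al be) (Rpower z q * Rpower (Rabs v) p)).
  apply Hc_deriv. lra. field. lra.
Qed.

Lemma du_eq C p q al be u v z : 0 < C -> v <> 0 ->
  d_u (phi1 C p q al be) u v z =
    Rpower z q * Rpower (Rabs v) p / Rabs v * H1c C p al be (u / Rabs v).
Proof. intros. unfold d_u. apply isd_unique. apply du_is; auto. Qed.

Lemma duu_eq C p q al be u v z : 0 < C -> v <> 0 ->
  d_uu (phi1 C p q al be) u v z =
    Rpower z q * Rpower (Rabs v) p / Rabs v ^ 2 * H2c C p al be (u / Rabs v).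
Proof.
  intros HC Hv. pose proof (Rabs_pos' v Hv). unfold d_uu.
  rewrite (Derive_ext _ (fun x => Rpower z q * Rpower (Rabs v) p / Rabs v * H1c C p al be (x / Rabs v))).
  2:{ intros t. apply isd_unique. apply du_is; auto. }
  apply isd_unique.
  eapply isd_eq. apply (Gu_deriv (H1c C p al be) (H2c C p al be)).
  apply H1c_deriv. lra. field. lra.
Qed.

Lemma dz_eq C p q al be u v z : 0 < C -> v <> 0 -> 0 < z ->
  d_z (phi1 C p q al be) u v z =
    q * Rpower z (q - 1) * (Rpower (Rabs v) p * Hc C p al be (u / Rabs v)).
Proof.
  intros HC Hv Hz. unfold d_z.
  apply isd_unique.
  apply (isd_ext (fun x => Rpower x q * (Rpower (Rabs v) p * Hc C p al be (u / Rabs v)))).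
  intros t. rewrite phi1_eq; auto.
  eapply isd_eq. apply (isd_mult (fun x => Rpower x q) (fun _ => Rpower (Rabs v) p * Hc C p al be (u / Rabs v))). apply isd_Rpower; auto.
  apply isd_const. cbv beta. ring.
Qed.

Lemma loc_sig (sg v : R) : (sg = 1 \/ sg = -1) -> 0 < sg * v ->
  locally v (fun y => 0 < sg * y).
Proof.
  intros Hs Hv. exists (mkposreal _ Hv). intros y Hy.
  change (Rabs (y - v) < sg * v) in Hy.
  destruct (Rabs_def2 _ _ Hy). destruct Hs; subst; lra.
Qed.

Lemma abs_sig (sg y : R) : (sg = 1 \/ sg = -1) -> 0 < sg * y -> Rabs y = sg * y.
Proof.
  intros [-> | ->] H. rewrite Rabs_right; lra. rewrite Rabs_left; lra.
Qed.

Lemma dv_is C p q al be u v z sg : 0 < C -> (sg = 1 \/ sg = -1) -> 0 < sg * v ->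
  is_derive (fun y => phi1 C p q al be u y z) v
    (Rpower z q * (sg * G1f C p al be u (sg * v))).
Proof.
  intros HC Hs Hv.
  apply (isd_ext_loc (fun y => Rpower z q * (Rpower (sg * y) p * Hc C p al be (u / (sg * y))))).
  { generalize (loc_sig sg v Hs Hv). apply filter_imp. intros y Hy.
    rewrite phi1_eq; auto. rewrite (abs_sig sg y); auto. nra. }
  apply (isd_scal (fun y => Rpower (sg * y) p * Hc C p al be (u / (sg * y)))).
  apply (isd_comp (fun w => Rpower w p * Hc C p al be (u / w)) (fun y => sg * y)).
  apply Gv_deriv. apply Hc_deriv. auto.
  eapply isd_eq. apply (isd_scal (fun y => y)). apply isd_id. ring.
Qed.


Lemma lin_deriv (sg x : R) : is_derive (fun y => sg * y) x sg.
Proof. eapply isd_eq. apply (isd_scal (fun y => y)). apply isd_id. ring. Qed.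

Lemma dvv_eq C p q al be u v z sg : 0 < C -> (sg = 1 \/ sg = -1) -> 0 < sg * v ->
  d_vv (phi1 C p q al be) u v z = Rpower z q * G2f C p al be u (sg * v).
Proof.
  intros HC Hs Hv. unfold d_vv.
  rewrite (Derive_ext_loc _ (fun y => Rpower z q * (sg * G1f C p al be u (sg * y)))).
  2:{ generalize (loc_sig sg v Hs Hv). apply filter_imp. intros y Hy.
      apply isd_unique. apply dv_is; auto. }
  apply isd_unique.
  eapply isd_eq.
  apply (isd_scal (fun y => sg * G1f C p al be u (sg * y))).
  apply (isd_scal (fun y => G1f C p al be u (sg * y))).
  apply (isd_comp (G1f C p al be u) (fun y => sg * y)).
  apply Gv1_deriv. apply Hc_deriv. apply H1c_deriv. auto.
  apply lin_deriv.
  unfold G2f. destruct Hs as [-> | ->]; ring.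
Qed.

Lemma dv_eq C p q al be u v z sg : 0 < C -> (sg = 1 \/ sg = -1) -> 0 < sg * v ->
  v * d_v (phi1 C p q al be) u v z = Rpower z q * (Rabs v * G1f C p al be u (Rabs v)).
Proof.
  intros HC Hs Hv. unfold d_v.
  replace (Derive _ v) with (Rpower z q * (sg * G1f C p al be u (sg * v))).
  2:{ symmetry. apply isd_unique. apply dv_is; auto. }
  rewrite (abs_sig sg v) by auto. destruct Hs as [-> | ->]; ring.
Qed.

Definition bnd (g : R -> R) (C : R) : Prop :=
  exists B, forall s, - C <= s <= 1 / C -> Rabs (g s) <= B.

Lemma bnd_plus (f g : R -> R) C : bnd f C -> bnd g C -> bnd (fun s => f s + g s) C.
Proof.
  intros [B1 H1] [B2 H2]. exists (B1 + B2). intros s Hs.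
  eapply Rle_trans. apply Rabs_triang. specialize (H1 s Hs). specialize (H2 s Hs). lra.
Qed.
Lemma bnd_minus (f g : R -> R) C : bnd f C -> bnd g C -> bnd (fun s => f s - g s) C.
Proof.
  intros [B1 H1] [B2 H2]. exists (B1 + B2). intros s Hs.
  eapply Rle_trans. apply Rabs_triang. rewrite Rabs_Ropp. specialize (H1 s Hs). specialize (H2 s Hs). lra.
Qed.
Lemma bnd_mult (f g : R -> R) C : bnd f C -> bnd g C -> bnd (fun s => f s * g s) C.
Proof.
  intros [B1 H1] [B2 H2]. exists (B1 * B2). intros s Hs.
  rewrite Rabs_mult. specialize (H1 s Hs). specialize (H2 s Hs).
  apply Rmult_le_compat; auto; apply Rabs_pos.
Qed.
Lemma bnd_const (k C : R) : bnd (fun _ => k) C.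
Proof. exists (Rabs k). intros; lra. Qed.
Lemma bnd_id (C : R) : 0 < C -> bnd (fun s => s) C.
Proof.
  intros HC. exists (C + 1 / C). intros s Hs.
  assert (0 < 1 / C) by (apply Rdiv_lt_0_compat; lra).
  apply Rabs_le. lra.
Qed.
Lemma bnd_pow2 (C : R) : 0 < C -> bnd (fun s => s ^ 2) C.
Proof.
  intros HC. apply (bnd_mult (fun s => s) (fun s => s * 1)). apply bnd_id; auto.
  apply (bnd_mult (fun s => s) (fun _ => 1)). apply bnd_id; auto. apply bnd_const.
Qed.

Lemma dom_sq (C s : R) : 0 < C -> - C <= s <= 1 / C -> s ^ 2 <= C ^ 2 + (1 / C) ^ 2.
Proof.
  intros HC Hs. assert (0 < 1 / C) by (apply Rdiv_lt_0_compat; lra).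
  destruct (Rle_dec 0 s); nra.
Qed.

Lemma bnd_Pw (a C : R) : 0 < C -> bnd (Pw a) C.
Proof.
  intros HC. exists (Pw (Rabs a) (sqrt (C ^ 2 + (1 / C) ^ 2))). intros s Hs.
  rewrite Rabs_right by (apply Rle_ge, Rlt_le, Pw_pos).
  apply Pw_bound. apply (dom_sq C); auto.
Qed.

Lemma fI_nonneg (e t s : R) : s <= t -> 0 <= fI e t s.
Proof.
  intros. unfold fI. apply RInt_ge_0; auto. apply Pw_exRInt.
  intros; apply Rlt_le, Pw_pos.
Qed.

Lemma bnd_fI (e C : R) : 0 < C -> bnd (fI e (1 / C)) C.
Proof.
  intros HC. exists ((1 / C + C) * Pw (Rabs e) (sqrt (C ^ 2 + (1 / C) ^ 2))).
  intros s Hs. unfold fI.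
  eapply Rle_trans. apply abs_RInt_le_const. lra. apply Pw_exRInt.
  intros x Hx. rewrite Rabs_right by (apply Rle_ge, Rlt_le, Pw_pos).
  apply Pw_bound. apply (dom_sq C); auto. lra.
  apply Rmult_le_compat_r. apply Rlt_le, Pw_pos. lra.
Qed.

Ltac bnd_tac :=
  repeat match goal with
  | |- bnd (fun s => _ + _) _ => apply bnd_plus
  | |- bnd (fun s => _ - _) _ => apply bnd_minus
  | |- bnd (fun s => _ * _) _ => apply bnd_mult
  | |- bnd (fun s => s ^ 2) _ => apply bnd_pow2; assumption
  | |- bnd (fun s => s) _ => apply bnd_id; assumption
  | |- bnd (fun s => Pw _ s) _ => apply bnd_Pw; assumption
  | |- bnd (Rmult ?k) _ => apply (bnd_mult (fun _ => k) (fun s => s))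
  | |- bnd (Pw _) _ => apply bnd_Pw; assumption
  | |- bnd (fI _ _) _ => apply bnd_fI; assumption
  | |- bnd (fun s => fI _ _ s) _ => apply bnd_fI; assumption
  | |- bnd (fun s => Kf _ _ _ _ s) _ => unfold Kf
  | |- bnd (fun s => _) _ => apply bnd_const
  end.

Lemma bnd_H (C p al be : R) : 0 < C -> bnd (Hc C p al be) C.
Proof.
  intros HC. change (bnd (fun s => Pw ((p + be) / 2) s * (/ Rpower (/ C ^ 2 + 1) (be / 2) + be / (2 * C) * fI ((al - be - 1) / 2) (1 / C) s)) C).
  bnd_tac.
Qed.

Lemma bnd_H1 (C p al be : R) : 0 < C -> bnd (H1c C p al be) C.
Proof.
  intros HC. Transparent H1c. unfold H1c, H1f, Kf. bnd_tac.
Qed.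
Lemma bnd_H2 (C p al be : R) : 0 < C -> bnd (H2c C p al be) C.
Proof.
  intros HC. Transparent H2c. unfold H2c, H2f, Kf. bnd_tac.
Qed.

Lemma decr_of_deriv (f df : R -> R) (a b : R) : a <= b -> (forall x, is_derive f x (df x)) ->
  (forall x, a <= x <= b -> df x <= 0) -> f b <= f a.
Proof.
  intros Hab Hd Hn.
  destruct (MVT_gen f a b df) as [c [Hc Heq]].
  - intros; apply Hd.
  - intros x _. apply continuity_pt_filterlim.
    apply (ex_derive_continuous (K:=R_AbsRing) (V:=R_NormedModule)). eexists; apply Hd.
  - rewrite Rmin_left, Rmax_right in Hc by auto.
    specialize (Hn c Hc). nra.
Qed.

Definition Lam (A c e t be x : R) : R := A * Pw (be / 2) x + c * fI e t x.
Definition dLam (A c e t be x : R) : R :=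
  A * (2 * (be / 2) * x * Pw (be / 2 - 1) x) + c * (- Pw e x).

Lemma Lam_deriv A c e t be x : is_derive (Lam A c e t be) x (dLam A c e t be x).
Proof.
  unfold Lam, dLam. apply isd_plus.
  apply isd_scal. apply Pw_deriv. apply isd_scal. apply fI_deriv.
Qed.

Definition Dm (A c e t be x : R) : R := Lam A c e t be x + be / 2 * Pw (- (1 / 2)) x.
Definition dDm (A c e t be x : R) : R :=
  dLam A c e t be x + be / 2 * (2 * (- (1 / 2)) * x * Pw (- (1 / 2) - 1) x).

Lemma Dm_deriv A c e t be x : is_derive (Dm A c e t be) x (dDm A c e t be x).
Proof.
  unfold Dm, dDm. apply isd_plus. apply Lam_deriv. apply isd_scal. apply Pw_deriv.
Qed.

Lemma Pw_half (x : R) : Pw (- (1 / 2)) x * Pw (- (1 / 2)) x = / (1 + x ^ 2).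
Proof. rewrite <- Pw_plus. replace (- (1/2) + - (1/2)) with (-1) by field. apply Pw_m1. Qed.

Lemma Pw_sub1 (a x : R) : Pw (a - 1) x = Pw a x / (1 + x ^ 2).
Proof. unfold Rminus. rewrite Pw_plus. replace (- (1)) with (-1) by ring. rewrite Pw_m1. field. nra. Qed.

Lemma dDm_nonpos A c e t be x : 0 < be -> - (1 / 2) <= e -> 0 <= x <= t ->
  A * Pw (be / 2) t = 1 -> c = be / 2 * t -> dDm A c e t be x <= 0.
Proof.
  intros Hbe He Hx HA Hc. unfold dDm, dLam.
  assert (Ha : A * Pw (be / 2) x <= 1).
  { rewrite <- HA. assert (0 < A).
    { apply (Rmult_lt_reg_r (Pw (be/2) t)). apply Pw_pos. rewrite HA. lra. }
    apply Rmult_le_compat_l. lra. apply Pw_mono_s. lra. nra. }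
  assert (HA0 : 0 <= A).
  { assert (0 < Pw (be/2) t) by apply Pw_pos. nra. }
  rewrite (Pw_sub1 (be / 2)).
  replace (- (1/2) - 1) with (- (1/2) + -1) by field. rewrite Pw_plus, Pw_m1.
  assert (Hy : 0 < Pw (- (1 / 2)) x) by apply Pw_pos.
  assert (Hy2 := Pw_half x).
  assert (Hye : Pw (- (1 / 2)) x <= Pw e x) by (apply Pw_mono_exp; auto).
  set (y := Pw (- (1 / 2)) x) in *.
  set (P := Pw (be / 2) x) in *.
  assert (H1x : 0 < 1 + x ^ 2) by nra.
  assert (Hinv : / (1 + x ^ 2) = y * y) by (rewrite Hy2; auto).
  assert (E1 : A * (2 * (be / 2) * x * (P / (1 + x ^ 2))) = be * x * (A * P) * (y * y)).
  { unfold Rdiv. rewrite Hinv. field. }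
  rewrite E1. subst c.
  assert (0 <= x * y) by nra.
  assert (be * x * (A * P) * (y * y) <= be * x * (y * y)).
  { assert (0 <= be * x * (y*y)) by (apply Rmult_le_pos; nra).
    replace (be * x * (A * P) * (y * y)) with ((A * P) * (be * x * (y * y))) by ring. nra. }
  assert (x * y <= t * Pw e x) by nra.
  assert (be / 2 * t * Pw e x >= be / 2 * x * y) by nra.
  assert (be / 2 * (2 * - (1 / 2) * x * (y * (y * y))) = - (be / 2) * x * y * (y * y)) by field.
  assert (0 <= be / 2 * x * y * (1 - y) ^ 2).
  { apply Rmult_le_pos; [ | apply pow2_ge_0 ]. replace (be/2*x*y) with ((be/2)*(x*y)) by ring. apply Rmult_le_pos; lra. }
  nra.
Qed.

Lemma fI_tt (e t : R) : fI e t t = 0.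
Proof. unfold fI. rewrite RInt_point. reflexivity. Qed.

Lemma Lam_lb_pos A c e t be x : 0 < be -> be < 1 -> - (1 / 2) <= e -> 0 <= x <= t ->
  A * Pw (be / 2) t = 1 -> c = be / 2 * t -> 1 - be / 2 <= Lam A c e t be x.
Proof.
  intros Hbe Hbe1 He Hx HA Hc.
  assert (H := decr_of_deriv (Dm A c e t be) (dDm A c e t be) x t ltac:(lra)
     (Dm_deriv A c e t be) (fun y Hy => dDm_nonpos A c e t be y Hbe He ltac:(lra) HA Hc)).
  unfold Dm, Lam in *. rewrite fI_tt in H.
  assert (0 < Pw (- (1/2)) t) by apply Pw_pos.
  assert (Pw (- (1/2)) x <= 1) by (apply Pw_le1; lra).
  nra.
Qed.

Lemma Lam_lb A c e t be x : 0 < be -> be < 1 -> - (1 / 2) <= e -> 0 <= t -> x <= t ->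
  A * Pw (be / 2) t = 1 -> 0 < c -> c = be / 2 * t -> 1 - be / 2 <= Lam A c e t be x.
Proof.
  intros Hbe Hbe1 He Ht Hx HA Hc0 Hc.
  destruct (Rle_dec 0 x) as [Hx0 | Hx0].
  - apply Lam_lb_pos; auto.
  - apply Rle_trans with (Lam A c e t be 0). apply Lam_lb_pos; auto. lra.
    apply (decr_of_deriv (Lam A c e t be) (dLam A c e t be) x 0). lra. apply Lam_deriv.
    intros y Hy. unfold dLam.
    assert (0 < A).
    { apply (Rmult_lt_reg_r (Pw (be/2) t)). apply Pw_pos. rewrite HA. lra. }
    assert (0 < Pw (be / 2 - 1) y) by apply Pw_pos.
    assert (0 < Pw e y) by apply Pw_pos.
    assert (0 <= - y * Pw (be / 2 - 1) y) by nra.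
    assert (A * (2 * (be / 2) * y * Pw (be / 2 - 1) y) = - (A * be) * (- y * Pw (be / 2 - 1) y)) by field.
    assert (0 < A * be) by nra.
    nra.
Qed.

Lemma psi_lb (C al be s : R) : 0 < C -> 0 < be -> be < al -> al < 1 -> - C <= s <= 1 / C ->
  1 - be / 2 <= Pw (be / 2) s *
    Kf (/ Rpower (/ C ^ 2 + 1) (be / 2)) (be / (2 * C)) ((al - be - 1) / 2) (1 / C) s.
Proof.
  intros HC Hbe Hba Hal Hs.
  assert (Ht : 0 < 1 / C) by (apply Rdiv_lt_0_compat; lra).
  assert (HA : / Rpower (/ C ^ 2 + 1) (be / 2) * Pw (be / 2) (1 / C) = 1).
  { unfold Pw. replace (1 + (1 / C) ^ 2) with (/ C ^ 2 + 1) by (field; lra).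
    field. apply Rgt_not_eq. unfold Rpower. apply exp_pos. }
  assert (Hc : be / (2 * C) = be / 2 * (1 / C)) by (field; lra).
  assert (Hc0 : 0 < be / (2 * C)) by (apply Rdiv_lt_0_compat; lra).
  pose proof (Lam_lb (/ Rpower (/ C ^ 2 + 1) (be / 2)) (be / (2 * C)) ((al - be - 1) / 2) (1 / C) be s
     Hbe ltac:(lra) ltac:(lra) ltac:(lra) ltac:(lra) HA Hc0 Hc) as HL.
  unfold Lam in HL. unfold Kf.
  assert (1 <= Pw (be / 2) s) by (apply Pw_ge1; lra).
  assert (0 <= fI ((al - be - 1) / 2) (1 / C) s) by (apply fI_nonneg; lra).
  assert (0 <= be / (2 * C) * fI ((al - be - 1) / 2) (1 / C) s) by (apply Rmult_le_pos; lra).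
  nra.
Qed.

Lemma Rpower_le1 (z a : R) : 0 < z <= 1 -> 0 <= a -> Rpower z a <= 1.
Proof.
  intros Hz Ha. unfold Rpower. rewrite <- exp_0.
  assert (ln z <= 0). { rewrite <- ln_1. destruct (Req_dec z 1). subst; lra. apply Rlt_le, ln_increasing; lra. }
  destruct (Req_dec (a * ln z) 0) as [E|E]. rewrite E; lra.
  apply Rlt_le, exp_increasing. assert (a * ln z <= 0) by nra. lra.
Qed.

Lemma Rpower_pos (z a : R) : 0 < Rpower z a.
Proof. unfold Rpower; apply exp_pos. Qed.

Lemma z_facts (z q : R) : 0 < z <= 1 ->
  Rpower z (1/3) * Rpower z (q - 1) = Rpower z q / Rpower z (2/3) /\
  Rpower z q <= Rpower z q / Rpower z (2/3).
Proof.
  intros Hz. split.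
  - rewrite <- Rpower_plus. unfold Rdiv. rewrite <- Rpower_Ropp, <- Rpower_plus. f_equal. field.
  - assert (0 < Rpower z (2/3)) by apply Rpower_pos.
    assert (Rpower z (2/3) <= 1) by (apply Rpower_le1; lra).
    assert (0 < Rpower z q) by apply Rpower_pos.
    apply (Rmult_le_reg_r (Rpower z (2/3))); auto. field_simplify; try lra. nra.
Qed.

Lemma Lop_eq gamma h k1 k2 C p q al be u v z sg :
  0 < C -> (sg = 1 \/ sg = -1) -> 0 < sg * v -> 0 < z <= 1 ->
  be = alpha_h h * p - (1 - h) * q ->
  Lop gamma h k1 k2 (phi1 C p q al be) u v z =
   - gamma * p * Rpower z q * (Rpower (Rabs v) p * Hc C p al be (u / Rabs v))
   - (Rpower z q / Rpower z (2/3)) * Rabs v * Rpower (Rabs v) p * (be / (2 * C))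
       * ((1 + (u / Rabs v) ^ 2) * Pw ((p + be) / 2) (u / Rabs v) * Pw ((al - be - 1) / 2) (u / Rabs v))
   + (Rpower z q / Rpower z (2/3)) * (Rpower (Rabs v) p / Rabs v ^ 2)
       * (k1 * H2c C p al be (u / Rabs v) + k2 * (p * (p - 1) * Hc C p al be (u / Rabs v)
          - 2 * (p - 1) * (u / Rabs v) * H1c C p al be (u / Rabs v)
          + (u / Rabs v) ^ 2 * H2c C p al be (u / Rabs v))).
Proof.
  intros HC Hs Hsv Hz Hbe.
  assert (Hv : v <> 0) by (intro; subst; lra).
  assert (Hw : Rabs v = sg * v) by (apply abs_sig; auto).
  assert (Hwp : 0 < Rabs v) by (apply Rabs_pos'; auto).
  assert (Hzq : 0 < Rpower z (2/3)) by apply Rpower_pos.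
  destruct (z_facts z q Hz) as [Hz13 _].
  assert (HL : Lop gamma h k1 k2 (phi1 C p q al be) u v z =
    - gamma * u * d_u (phi1 C p q al be) u v z - gamma * (v * d_v (phi1 C p q al be) u v z)
    - (alpha_h h * u ^ 2 - v ^ 2) / Rpower z (2 / 3) * d_u (phi1 C p q al be) u v z
    - (alpha_h h + 1) * u / Rpower z (2 / 3) * (v * d_v (phi1 C p q al be) u v z)
    + (1 - h) * u * Rpower z (1 / 3) * d_z (phi1 C p q al be) u v z
    + k1 / Rpower z (2 / 3) * d_uu (phi1 C p q al be) u v z
    + k2 / Rpower z (2 / 3) * d_vv (phi1 C p q al be) u v z).
  { unfold Lop. field. lra. }
  rewrite HL; clear HL.
  rewrite (dv_eq C p q al be u v z sg), du_eq, duu_eq, dz_eq, (dvv_eq C p q al be u v z sg) by (auto; lra).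
  rewrite <- Hw.
  unfold G1f, G2f.
  replace (v ^ 2) with (Rabs v ^ 2) by apply pow2_abs.
  set (s := u / Rabs v).
  assert (Hu : u = s * Rabs v) by (unfold s; field; lra).
  clearbody s. rewrite Hu. clear Hu.
  replace (s * Rabs v / Rabs v) with s by (field; lra).
  Transparent Hc H1c. unfold H1c, H1f, Hc, Hf.
  rewrite (Pw_sub1 ((p + be) / 2)).
  set (Z1 := Rpower z (q - 1)) in *.
  set (Z13 := Rpower z (1/3)) in *.
  replace ((1 - h) * (s * Rabs v) * Z13 * (q * Z1 * _))
    with ((1 - h) * (s * Rabs v) * (Z13 * Z1) * q * (Rpower (Rabs v) p *
      (Pw ((p + be) / 2) s *
       Kf (/ Rpower (/ C ^ 2 + 1) (be / 2)) (be / (2 * C)) ((al - be - 1) / 2) (1 / C) s))) by ring.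
  rewrite Hz13.
  unfold alpha_h in *. subst be.
  field. repeat split; try lra; nra.
Qed.

Ltac bnd_tac2 :=
  repeat match goal with
  | |- bnd (fun s => _ + _) _ => apply bnd_plus
  | |- bnd (fun s => _ - _) _ => apply bnd_minus
  | |- bnd (fun s => _ * _) _ => apply bnd_mult
  | |- bnd (fun s => s ^ 2) _ => apply bnd_pow2; assumption
  | |- bnd (fun s => s) _ => apply bnd_id; assumption
  | |- bnd (fun s => Hc _ _ _ _ s) _ => apply bnd_H; assumption
  | |- bnd (fun s => H1c _ _ _ _ s) _ => apply bnd_H1; assumption
  | |- bnd (fun s => H2c _ _ _ _ s) _ => apply bnd_H2; assumption
  | |- bnd (Hc _ _ _ _) _ => apply bnd_H; assumption
  | |- bnd (H1c _ _ _ _) _ => apply bnd_H1; assumption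
  | |- bnd (H2c _ _ _ _) _ => apply bnd_H2; assumption
  | |- bnd (Rmult ?k) _ => apply (bnd_mult (fun _ => k) (fun s => s))
  | |- bnd (fun s => _) _ => apply bnd_const
  end.

Lemma Kf_pos C al be s : 0 < C -> 0 < be -> s <= 1 / C ->
  0 < Kf (/ Rpower (/ C ^ 2 + 1) (be / 2)) (be / (2 * C)) ((al - be - 1) / 2) (1 / C) s.
Proof.
  intros. unfold Kf. assert (0 < / Rpower (/ C ^ 2 + 1) (be / 2)) by (apply Rinv_0_lt_compat, Rpower_pos).
  assert (0 <= fI ((al - be - 1) / 2) (1 / C) s) by (apply fI_nonneg; auto).
  assert (0 < be / (2 * C)) by (apply Rdiv_lt_0_compat; lra).
  nra.
Qed.

Lemma Hc_pos C p al be s : 0 < C -> 0 < be -> s <= 1 / C -> 0 < Hc C p al be s.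
Proof.
  intros. Transparent Hc. unfold Hc, Hf. apply Rmult_lt_0_compat. apply Pw_pos. apply Kf_pos; auto.
Qed.

Lemma L_bound gamma h k1 k2 C p q al be :
  0 < gamma -> 0 < k1 -> 0 < k2 -> 0 < p -> 0 < C ->
  be = alpha_h h * p - (1 - h) * q -> 0 < be -> be < al -> al < 1 ->
  exists Wb, 0 < Wb /\ forall u v z, v <> 0 -> Rabs v >= Wb ->
    - C * Rabs v <= u <= / C * Rabs v -> 0 < z <= 1 ->
    Lop gamma h k1 k2 (phi1 C p q al be) u v z
      <= - (be / (2 * C)) / 2 * Rpower (rad u v) (p + 1) * Rpower z q
           * Rpower (Rabs (rad u v / v)) al.
Proof.
  intros Hg Hk1 Hk2 Hp HC Hbe Hbe0 Hba Hal.
  assert (Hb : bnd (fun s => k1 * H2c C p al be s + k2 * (p * (p - 1) * Hc C p al be s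
          - 2 * (p - 1) * s * H1c C p al be s + s ^ 2 * H2c C p al be s)) C) by bnd_tac2.
  destruct Hb as [Eb HEb].
  set (c := be / (2 * C)).
  assert (Hc0 : 0 < c) by (apply Rdiv_lt_0_compat; lra).
  exists (1 + 2 * Rabs Eb / c). split.
  { assert (0 <= 2 * Rabs Eb / c) by (apply Rdiv_le_0_compat; [pose proof (Rabs_pos Eb); lra | lra]). lra. }
  intros u v z Hv Hwb Hu Hz.
  assert (Hwp : 0 < Rabs v) by (apply Rabs_pos'; auto).
  set (w := Rabs v) in *.
  assert (Hs : - C <= u / w <= 1 / C).
  { assert (E : u / w * w = u) by (field; lra).
    split; apply (Rmult_le_reg_r w); auto; rewrite E. lra.
    replace (1 / C * w) with (/ C * w) by (field; lra). lra. }
  assert (Main : forall sg, (sg = 1 \/ sg = -1) -> 0 < sg * v ->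
    Lop gamma h k1 k2 (phi1 C p q al be) u v z
      <= - (be / (2 * C)) / 2 * Rpower (rad u v) (p + 1) * Rpower z q
           * Rpower (Rabs (rad u v / v)) al).
  { intros sg Hsg Hsv.
    rewrite (Lop_eq gamma h k1 k2 C p q al be u v z sg) by auto.
    rewrite Rpower_rad, Rpower_radv by auto. fold w.
    rewrite Rpower_plus, Rpower_1 by auto.
    set (s := u / w) in *.
    assert (HQ : Pw ((p + 1) / 2) s * Pw (al / 2) s =
              (1 + s ^ 2) * Pw ((p + be) / 2) s * Pw ((al - be - 1) / 2) s).
    { rewrite <- Pw_1, <- !Pw_plus. f_equal. field. }
    assert (HQ1 : 1 <= Pw ((p + 1) / 2) s * Pw (al / 2) s).
    { assert (1 <= Pw ((p + 1) / 2) s) by (apply Pw_ge1; lra).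
      assert (1 <= Pw (al / 2) s) by (apply Pw_ge1; lra). nra. }
    rewrite <- HQ.
    destruct (z_facts z q Hz) as [_ HY].
    assert (HZ : 0 < Rpower z q) by apply Rpower_pos.
    assert (HW : 0 < Rpower w p) by apply Rpower_pos.
    assert (HH : 0 < Hc C p al be s) by (apply Hc_pos; lra).
    specialize (HEb s Hs). cbv beta in HEb.
    set (E := k1 * H2c C p al be s + k2 * (p * (p - 1) * Hc C p al be s
          - 2 * (p - 1) * s * H1c C p al be s + s ^ 2 * H2c C p al be s)) in *.
    set (Q := Pw ((p + 1) / 2) s * Pw (al / 2) s) in *.
    set (Y := Rpower z q / Rpower z (2 / 3)) in *.
    set (Z := Rpower z q) in *.
    set (W := Rpower w p) in *.
    fold c.
    assert (Hw1 : 1 <= w) by (assert (0 <= 2 * Rabs Eb / c) by (apply Rdiv_le_0_compat; [pose proof (Rabs_pos Eb); lra | lra]); lra).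
    assert (HE : E <= c / 2 * w ^ 3).
    { assert (E <= Rabs Eb) by (eapply Rle_trans; [apply Rle_abs | eapply Rle_trans; [apply HEb | apply Rle_abs]]).
      assert (2 * Rabs Eb / c <= w) by lra.
      assert (Rabs Eb <= c / 2 * w) by (apply (Rmult_le_reg_l (2 / c)); [apply Rdiv_lt_0_compat; lra | field_simplify; lra]).
      assert (w <= w ^ 3) by nra. nra. }
    assert (A1 : Y * (W / w ^ 2) * E <= c / 2 * (Y * W * w)).
    { assert (0 <= Y * (W / w ^ 2)) by (apply Rmult_le_pos; [lra | apply Rlt_le, Rdiv_lt_0_compat; nra]).
      apply Rle_trans with (Y * (W / w ^ 2) * (c / 2 * w ^ 3)). apply Rmult_le_compat_l; auto.
      right. field. lra. }
    assert (A2 : c / 2 * (Y * W * w) <= c / 2 * (Y * W * w * Q)).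
    { assert (0 <= c / 2 * (Y * W * w)) by (apply Rmult_le_pos; [lra | apply Rmult_le_pos; nra]). nra. }
    assert (A3 : c / 2 * (Z * W * w * Q) <= c / 2 * (Y * W * w * Q)).
    { apply Rmult_le_compat_l. lra. assert (0 <= W * w * Q) by (apply Rmult_le_pos; nra). nra. }
    assert (A4 : 0 <= gamma * p * Z * (W * Hc C p al be s)).
    { apply Rmult_le_pos. apply Rmult_le_pos. nra. lra. nra. }
    assert (Eq1 : Y * w * W * c * Q = Y * W * w * Q * c) by ring.
    assert (Eq2 : - c / 2 * (W * w * Pw ((p + 1) / 2) s) * Z * Pw (al / 2) s = - (c / 2 * (Z * W * w * Q))) by (unfold Q; field).
    match goal with |- ?G => idtac G end. rewrite Eq2. rewrite Eq1. 
    assert (c / 2 * (Y * W * w * Q) = Y * W * w * Q * c / 2) by field.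
    lra. }
  destruct (Rlt_dec 0 v) as [Hvp | Hvn].
  - apply (Main 1). auto. lra.
  - apply (Main (-1)). auto. assert (v < 0) by (destruct (Rle_lt_or_eq_dec v 0); [lra | lra | congruence]). lra.
Qed.

Lemma dz_is C p q al be u v z : 0 < C -> v <> 0 -> 0 < z ->
  is_derive (fun x => phi1 C p q al be u v x) z
    (q * Rpower z (q - 1) * (Rpower (Rabs v) p * Hc C p al be (u / Rabs v))).
Proof.
  intros HC Hv Hz.
  apply (isd_ext (fun x => Rpower x q * (Rpower (Rabs v) p * Hc C p al be (u / Rabs v)))).
  intros t. rewrite phi1_eq; auto.
  eapply isd_eq. apply (isd_mult (fun x => Rpower x q) (fun _ => Rpower (Rabs v) p * Hc C p al be (u / Rabs v))).
  apply isd_Rpower; auto.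
  apply isd_const. cbv beta. ring.
Qed.

Lemma Rpower_one (x : R) : Rpower 1 x = 1.
Proof. unfold Rpower. rewrite ln_1, Rmult_0_r. apply exp_0. Qed.

Lemma Q_eq C p1 q1 a1 b1 p2 q2 a2 b2 u v sg : 0 < C -> (sg = 1 \/ sg = -1) -> 0 < sg * v ->
  Qop (fun u' v' z' => phi1 C p1 q1 a1 b1 u' v' z' + phi1 C p2 q2 a2 b2 u' v' z') u v 1 =
  (p1 / 3 - q1) * (Rpower (Rabs v) p1 * Hc C p1 a1 b1 (u / Rabs v))
  + (p2 / 3 - q2) * (Rpower (Rabs v) p2 * Hc C p2 a2 b2 (u / Rabs v)).
Proof.
  intros HC Hs Hsv.
  assert (Hv : v <> 0) by (intro; subst; lra).
  assert (Hw : Rabs v = sg * v) by (apply abs_sig; auto).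
  assert (Hwp : 0 < Rabs v) by (apply Rabs_pos'; auto).
  unfold Qop, d_u, d_v, d_z.
  replace (Derive _ u) with (Rpower 1 q1 * Rpower (Rabs v) p1 / Rabs v * H1c C p1 a1 b1 (u / Rabs v)
      + Rpower 1 q2 * Rpower (Rabs v) p2 / Rabs v * H1c C p2 a2 b2 (u / Rabs v)).
  2:{ symmetry. apply isd_unique. apply (isd_plus (fun x => phi1 C p1 q1 a1 b1 x v 1) (fun x => phi1 C p2 q2 a2 b2 x v 1)); apply du_is; auto. }
  replace (Derive _ v) with (Rpower 1 q1 * (sg * G1f C p1 a1 b1 u (sg * v))
      + Rpower 1 q2 * (sg * G1f C p2 a2 b2 u (sg * v))).
  2:{ symmetry. apply isd_unique. apply (isd_plus (fun x => phi1 C p1 q1 a1 b1 u x 1) (fun x => phi1 C p2 q2 a2 b2 u x 1)); apply dv_is; auto. }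
  replace (Derive _ 1) with (q1 * Rpower 1 (q1 - 1) * (Rpower (Rabs v) p1 * Hc C p1 a1 b1 (u / Rabs v))
      + q2 * Rpower 1 (q2 - 1) * (Rpower (Rabs v) p2 * Hc C p2 a2 b2 (u / Rabs v))).
  2:{ symmetry. apply isd_unique. apply (isd_plus (fun x => phi1 C p1 q1 a1 b1 u v x) (fun x => phi1 C p2 q2 a2 b2 u v x)); apply dz_is; auto; lra. }
  rewrite !Rpower_one. rewrite <- Hw. unfold G1f.
  set (w := Rabs v) in *.
  assert (Hvw : v = sg * w) by (rewrite Hw; destruct Hs as [-> | ->]; ring).
  clearbody w. subst v.
  set (s := u / w).
  assert (Hu : u = s * w) by (unfold s; field; lra).
  clearbody s. rewrite Hu.
  replace (s * w / w) with s by (field; lra).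
  assert (sg * sg = 1) by (destruct Hs as [-> | ->]; ring).
  destruct Hs as [-> | ->]; field; lra.
Qed.

Lemma Hc_split C p al be s : Hc C p al be s =
  Pw (p / 2) s * (Pw (be / 2) s *
    Kf (/ Rpower (/ C ^ 2 + 1) (be / 2)) (be / (2 * C)) ((al - be - 1) / 2) (1 / C) s).
Proof.
  Transparent Hc. unfold Hc, Hf. replace ((p + be) / 2) with (p / 2 + be / 2) by field.
  rewrite Pw_plus. ring.
Qed.

Lemma Q_bound C p1 a1 b1 p2 q2 a2 b2 : 0 < C -> 0 < p1 -> p1 < p2 -> 0 < b2 -> b2 < a2 -> a2 < 1 ->
  p2 / 3 < q2 ->
  exists Rq, 0 < Rq /\ forall u v, v <> 0 -> - C * Rabs v <= u <= / C * Rabs v -> rad u v >= Rq ->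
  Qop (fun u' v' z' => phi1 C p1 0 a1 b1 u' v' z' + phi1 C p2 q2 a2 b2 u' v' z') u v 1
    <= - (q2 / 2 - p2 / 6) * Rpower (rad u v) p2.
Proof.
  intros HC Hp1 Hp12 Hb2 Hba2 Ha2 Hq2.
  assert (Hb : bnd (fun s => Pw (b1 / 2) s *
    Kf (/ Rpower (/ C ^ 2 + 1) (b1 / 2)) (b1 / (2 * C)) ((a1 - b1 - 1) / 2) (1 / C) s) C) .
  { unfold Kf. bnd_tac. }
  destruct Hb as [B1 HB1].
  set (kap := q2 - p2 / 3).
  assert (Hkap : 0 < kap) by (unfold kap; lra).
  set (del := kap * (1 - b2) / 2).
  assert (Hdel : 0 < del) by (unfold del; apply Rdiv_lt_0_compat; [apply Rmult_lt_0_compat|]; lra).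
  set (X := p1 / 3 * Rabs B1 / del).
  assert (HX : 0 <= X) by (unfold X; apply Rdiv_le_0_compat; [apply Rmult_le_pos; [lra | apply Rabs_pos] | lra]).
  exists (Rpower (X + 1) (/ (p2 - p1))). split. apply Rpower_pos.
  intros u v Hv Hu Hr.
  assert (Hwp : 0 < Rabs v) by (apply Rabs_pos'; auto).
  assert (Hs : - C <= u / Rabs v <= 1 / C).
  { assert (E : u / Rabs v * Rabs v = u) by (field; lra).
    split; apply (Rmult_le_reg_r (Rabs v)); auto; rewrite E. lra.
    replace (1 / C * Rabs v) with (/ C * Rabs v) by (field; lra). lra. }
  assert (Hrp : 0 < rad u v).
  { eapply Rlt_le_trans. apply (Rpower_pos (X + 1) (/ (p2 - p1))). lra. }
  assert (Hrq : X + 1 <= Rpower (rad u v) (p2 - p1)).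
  { replace (X + 1) with (Rpower (Rpower (X + 1) (/ (p2 - p1))) (p2 - p1)).
    apply Rle_Rpower_l. lra. split. apply Rpower_pos. lra.
    rewrite Rpower_mult. replace (/ (p2 - p1) * (p2 - p1)) with 1 by (field; lra). apply Rpower_1. lra. }
  assert (Main : forall sg, (sg = 1 \/ sg = -1) -> 0 < sg * v ->
    Qop (fun u' v' z' => phi1 C p1 0 a1 b1 u' v' z' + phi1 C p2 q2 a2 b2 u' v' z') u v 1
      <= - (q2 / 2 - p2 / 6) * Rpower (rad u v) p2).
  { intros sg Hsg Hsv. rewrite (Q_eq C p1 0 a1 b1 p2 q2 a2 b2 u v sg) by auto.
    rewrite !Hc_split.
    pose proof (HB1 _ Hs) as HB. cbv beta in HB.
    pose proof (psi_lb C a2 b2 (u / Rabs v) HC Hb2 Hba2 Ha2 Hs) as Hpsi.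
    set (psi1 := Pw (b1 / 2) (u / Rabs v) *
       Kf (/ Rpower (/ C ^ 2 + 1) (b1 / 2)) (b1 / (2 * C)) ((a1 - b1 - 1) / 2) (1 / C) (u / Rabs v)) in *.
    set (psi2 := Pw (b2 / 2) (u / Rabs v) *
       Kf (/ Rpower (/ C ^ 2 + 1) (b2 / 2)) (b2 / (2 * C)) ((a2 - b2 - 1) / 2) (1 / C) (u / Rabs v)) in *.
    rewrite !Rpower_rad by auto.
    assert (Hpsi1 : psi1 <= Rabs B1) by (eapply Rle_trans; [apply Rle_abs | eapply Rle_trans; [apply HB | apply Rle_abs]]).
    set (R1 := Rpower (Rabs v) p1 * Pw (p1 / 2) (u / Rabs v)).
    set (R2 := Rpower (Rabs v) p2 * Pw (p2 / 2) (u / Rabs v)).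
    assert (HR1 : 0 < R1) by (apply Rmult_lt_0_compat; [apply Rpower_pos | apply Pw_pos]).
    assert (HR12 : R2 = R1 * Rpower (rad u v) (p2 - p1)).
    { unfold R1, R2. rewrite <- Rpower_rad by auto. rewrite <- Rpower_rad by auto.
      rewrite <- Rpower_plus. f_equal. ring. }
    assert (E1 : Rpower (Rabs v) p1 * (Pw (p1 / 2) (u / Rabs v) * psi1) = R1 * psi1) by (unfold R1; ring).
    assert (E2 : Rpower (Rabs v) p2 * (Pw (p2 / 2) (u / Rabs v) * psi2) = R2 * psi2) by (unfold R2; ring).
    rewrite E1, E2.
    assert (T1 : (p1 / 3 - 0) * (R1 * psi1) <= del * X * R1).
    { unfold X. replace (del * (p1 / 3 * Rabs B1 / del) * R1) with (p1 / 3 * (R1 * Rabs B1)) by (field; lra).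
      replace ((p1 / 3 - 0) * (R1 * psi1)) with (p1 / 3 * (R1 * psi1)) by ring.
      apply Rmult_le_compat_l. lra. apply Rmult_le_compat_l; lra. }
    assert (T2 : del * X * R1 <= del * R2 - del * R1).
    { rewrite HR12. assert (0 < del * R1) by (apply Rmult_lt_0_compat; auto). nra. }
    assert (HR2 : 0 < R2) by (rewrite HR12; apply Rmult_lt_0_compat; auto; apply Rpower_pos).
    assert (T3 : (p2 / 3 - q2) * (R2 * psi2) <= - kap * R2 * (1 - b2 / 2)).
    { replace ((p2 / 3 - q2) * (R2 * psi2)) with (- kap * R2 * psi2) by (unfold kap; ring).
      assert (0 < kap * R2) by (apply Rmult_lt_0_compat; auto). nra. }
    assert (T4 : del * R2 - kap * R2 * (1 - b2 / 2) = - (q2 / 2 - p2 / 6) * R2) by (unfold del, kap; field).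
    assert (0 < del * R1) by (apply Rmult_lt_0_compat; auto).
    lra. }
  destruct (Rlt_dec 0 v) as [Hvp | Hvn].
  - apply (Main 1). auto. lra.
  - apply (Main (-1)). auto. assert (v < 0) by (destruct (Rle_lt_or_eq_dec v 0); [lra | lra | congruence]). lra.
Qed.

Theorem lemma6p2
  (gamma h k1 k2 p1 p2 q1 q2 a1 a2 b1 b2 C : R)
  (Hgamma : 0 < gamma) (Hh : 0 < h < 1) (Hk1 : 0 < k1) (Hk2 : 0 < k2)
  (Hp1 : 0 < p1) (Hp2 : 0 < p2) (Hq1 : q1 = 0) (Hq2 : 0 < q2)
  (Hb1 : alpha_h h * p1 - (1 - h) * q1 = b1) (Hb2 : alpha_h h * p2 - (1 - h) * q2 = b2)
  (Hb1pos : 0 < b1) (Hb2pos : 0 < b2)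
  (Hba1 : b1 < a1) (Hba2 : b2 < a2) (Ha1 : a1 < 1) (Ha2 : a2 < 1)
  (Hq2big : q2 > 1 / 3 * p2 + 1 / 2 * a2)
  (Hp21 : p2 > p1)
  (Hpa : p2 + 3 / 2 * a2 > p1 + 3 / 2 * a1)
  (HC : 0 < C) :
  exists R0 : R, 0 < R0 /\
  forall rstar : R, rstar >= R0 ->
    (forall u v z : R, region1 C rstar u v z ->
       Lop gamma h k1 k2 (phi1 C p1 q1 a1 b1) u v z
         <= - (b1 / (2 * C)) / 2 * Rpower (rad u v) (p1 + 1) * Rpower z q1
              * Rpower (Rabs (rad u v / v)) a1
       /\
       Lop gamma h k1 k2 (phi1 C p2 q2 a2 b2) u v z
         <= - (b2 / (2 * C)) / 2 * Rpower (rad u v) (p2 + 1) * Rpower z q2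
              * Rpower (Rabs (rad u v / v)) a2)
    /\
    (forall u v : R, region1 C rstar u v 1 ->
       Qop (fun u' v' z' => phi1 C p1 q1 a1 b1 u' v' z' + phi1 C p2 q2 a2 b2 u' v' z') u v 1
         <= - (q2 / 2 - p2 / 6) * Rpower (rad u v) p2).
Proof.
  subst q1.
  destruct (L_bound gamma h k1 k2 C p1 0 a1 b1 Hgamma Hk1 Hk2 Hp1 HC (eq_sym Hb1) Hb1pos Hba1 Ha1)
    as [W1 [HW1 HL1]].
  destruct (L_bound gamma h k1 k2 C p2 q2 a2 b2 Hgamma Hk1 Hk2 Hp2 HC (eq_sym Hb2) Hb2pos Hba2 Ha2)
    as [W2 [HW2 HL2]].
  destruct (Q_bound C p1 a1 b1 p2 q2 a2 b2 HC Hp1 ltac:(lra) Hb2pos Hba2 Ha2 ltac:(lra))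
    as [Rq [HRq HQ]].
  set (K := sqrt (1 + (C ^ 2 + (1 / C) ^ 2))).
  assert (HK : 0 < K) by (apply sqrt_lt_R0; nra).
  set (R0 := Rmax (K * Rmax W1 W2) Rq).
  assert (HR0q : Rq <= R0) by apply Rmax_r.
  assert (HR0w : K * Rmax W1 W2 <= R0) by apply Rmax_l.
  exists R0. split. lra.
  intros rstar Hrs.
  assert (Key : forall u v, rad u v >= rstar -> / C * Rabs v >= u -> u >= - C * Rabs v ->
     v <> 0 /\ Rmax W1 W2 <= Rabs v /\ - C * Rabs v <= u <= / C * Rabs v /\ rad u v >= Rq).
  { intros u v Hr Hu1 Hu2.
    assert (Hv : v <> 0).
    { intros ->. rewrite Rabs_R0 in *. assert (u = 0) by nra. subst u.
      unfold rad in Hr. replace (0 ^ 2 + 0 ^ 2) with 0 in Hr by ring. rewrite sqrt_0 in Hr. lra. }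
    assert (Hwp : 0 < Rabs v) by (apply Rabs_pos'; auto).
    assert (Hs : - C <= u / Rabs v <= 1 / C).
    { assert (E : u / Rabs v * Rabs v = u) by (field; lra).
      split; apply (Rmult_le_reg_r (Rabs v)); auto; rewrite E. lra.
      replace (1 / C * Rabs v) with (/ C * Rabs v) by (field; lra). lra. }
    split; auto. split; [|split; [lra|lra]].
    assert (Hrad : rad u v <= Rabs v * K).
    { rewrite rad_eq by auto. apply Rmult_le_compat_l. lra. apply sqrt_le_1_alt.
      pose proof (dom_sq C (u / Rabs v) HC Hs). lra. }
    apply (Rmult_le_reg_l K); auto. lra. }
  split.
  - intros u v z [Hr [Hu1 [Hu2 Hz]]].
    destruct (Key u v Hr Hu1 Hu2) as [Hv [Hw [Hu _]]].
    split.
    + apply HL1; auto. pose proof (Rmax_l W1 W2). lra.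
    + apply HL2; auto. pose proof (Rmax_r W1 W2). lra.
  - intros u v [Hr [Hu1 [Hu2 Hz]]].
    destruct (Key u v Hr Hu1 Hu2) as [Hv [Hw [Hu Hrq]]].
    apply HQ; auto.
Qed.
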